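(* Let $\Omega$ be a transitive state space. There exists a basis $\{v_l\}_{l=1}^{N+1}$ of $V$, orthonormal with respect to $\langle\cdot,\cdot\rangle_{GL(\Omega)}$, such that $v_{N+1}=\omega_M$ and, for $x\in V$, $$x\in\mathrm{aff}(\Omega)\iff x=\sum_{l=1}^Na_lv_l+\omega_M\ \text{ for some }a_1,\dots,a_N\in\mathbb R.$$
   Context: $V=\mathbb R^{N+1}$ with Euclidean inner product $(\cdot,\cdot)_E$. A state space $\Omega\subset V$ is a compact convex set with $\mathrm{span}(\Omega)=V$ and $0\notin\mathrm{aff}(\Omega)$ (so $\dim\mathrm{aff}(\Omega)=N$). $GL(\Omega)$ is the compact group of linear bijections $T:V\to V$ with $T(\Omega)=\Omega$, $\mu$ its normalized two-sided Haar measure, and $\langle x,y\rangle_{GL(\Omega)}=\int_{GL(\Omega)}(Tx,Ty)_E\,d\mu(T)$. $\Omega$ is transitive if $GL(\Omega)$ acts transitively on its extreme points; then there is a unique state $\omega_M$ (maximally mixed state) with $T\omega_M=\omega_M$ for all $T\in GL(\Omega)$, and by the standing convention for transitive state spaces $\Omega$ is rescaled so that $(\omega_M,\omega_M)_E=1$. *)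

(* Defs.v *)
From HB Require Import structures.
From mathcomp Require Import all_boot all_order all_algebra.
From mathcomp Require Import all_classical all_reals all_analysis.
Set Implicit Arguments. Unset Strict Implicit. Unset Printing Implicit Defensive.
Import Order.TTheory GRing.Theory Num.Theory.
Import numFieldNormedType.Exports.
Local Open Scope classical_set_scope.
Local Open Scope ring_scope.

(* V = R^n represented as column vectors 'cV[R]_n  (n = N+1 in the paper). *)

Definition dotE (R : realType) (n : nat) (x y : 'cV[R]_n) : R :=
  \sum_(i < n) x i 0 * y i 0.

Definition convex_set (R : realType) (n : nat) (S : set 'cV[R]_n) : Prop :=
  forall x y (t : R), S x -> S y -> 0 <= t <= 1 -> S (t *: x + (1 - t) *: y).

Definition lin_span (R : realType) (n : nat) (S : set 'cV[R]_n) : set 'cV[R]_n :=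
  [set x | exists (k : nat) (c : 'I_k -> R) (w : 'I_k -> 'cV[R]_n),
     (forall i, S (w i)) /\ x = \sum_(i < k) c i *: w i].

Definition aff_hull (R : realType) (n : nat) (S : set 'cV[R]_n) : set 'cV[R]_n :=
  [set x | exists (k : nat) (c : 'I_k -> R) (w : 'I_k -> 'cV[R]_n),
     (forall i, S (w i)) /\ \sum_(i < k) c i = 1 /\ x = \sum_(i < k) c i *: w i].

Definition state_space (R : realType) (n : nat) (Om : set 'cV[R]_n) : Prop :=
  compact Om /\ convex_set Om /\ lin_span Om = setT /\ ~ aff_hull Om 0.

Definition GLOm (R : realType) (n : nat) (Om : set 'cV[R]_n) : set 'M[R]_n :=
  [set T | T \in unitmx /\ (fun x => T *m x) @` Om = Om].

Definition extreme_point (R : realType) (n : nat) (Om : set 'cV[R]_n)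
    (x : 'cV[R]_n) : Prop :=
  Om x /\ forall y z (t : R), Om y -> Om z -> 0 < t < 1 ->
    x = t *: y + (1 - t) *: z -> y = z.

Definition transitive_ss (R : realType) (n : nat) (Om : set 'cV[R]_n) : Prop :=
  forall x y, extreme_point Om x -> extreme_point Om y ->
    exists T, GLOm Om T /\ T *m x = y.

(* I is the normalized two-sided Haar integral of the compact group G,
   i.e. a positive, normalized, left- and right-invariant linear functional
   on the continuous real functions on G. *)
Definition haar_integral (R : realType) (n : nat) (G : set 'M[R]_n)
    (I : ('M[R]_n -> R) -> R) : Prop :=
  [/\ (forall f g : 'M[R]_n -> R, {within G, continuous f} -> {within G, continuous g} ->
         I (fun T => f T + g T) = I f + I g),
      (forall (c : R) (f : 'M[R]_n -> R), {within G, continuous f} ->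
         I (fun T => c * f T) = c * I f),
      (forall f : 'M[R]_n -> R, {within G, continuous f} -> (forall T, G T -> 0 <= f T) ->
         0 <= I f),
      I (fun _ => 1) = 1 &
      (forall S (f : 'M[R]_n -> R), G S -> {within G, continuous f} ->
         I (fun T => f (S *m T)) = I f /\ I (fun T => f (T *m S)) = I f)].

Definition haar_inner (R : realType) (n : nat) (I : ('M[R]_n -> R) -> R)
    (x y : 'cV[R]_n) : R :=
  I (fun T => dotE (T *m x) (T *m y)).

(* Main.v *)
Require Import Defs.
From HB Require Import structures.
From mathcomp Require Import all_boot all_order all_algebra.
From mathcomp Require Import all_classical all_reals all_analysis.
From mathcomp Require Import ring lra.
Set Implicit Arguments. Unset Strict Implicit. Unset Printing Implicit Defensive.
Import Order.TTheory GRing.Theory Num.Theory.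
Import numFieldNormedType.Exports.
Local Open Scope classical_set_scope.
Local Open Scope ring_scope.
Section A.
Variable R : realType.

Lemma sum_cont (T : topologicalType) (J : Type) (r : seq J) (F : J -> T -> R) :
  (forall j, continuous (F j)) -> continuous (fun t => \sum_(j <- r) F j t).
Proof.
move=> HF; elim: r => [|a r IH].
  under eq_fun do rewrite big_nil. exact: cst_continuous.
under eq_fun do rewrite big_cons.
by move=> x; apply: continuousD; [apply: HF|apply: IH].
Qed.

Lemma mul_cont (T : topologicalType) (f g : T -> R) :
  continuous f -> continuous g -> continuous (fun t => f t * g t).
Proof. by move=> Hf Hg x; apply: continuousM; [apply: Hf|apply: Hg]. Qed.

Lemma dotE_cont n (x y : 'cV[R]_n) :
  continuous (fun T : 'M[R]_n => dotE (T *m x) (T *m y)).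
Proof.
rewrite /dotE; apply: sum_cont => i; apply: mul_cont;
  under eq_fun do rewrite mxE; apply: sum_cont => k; apply: mul_cont;
  (exact: coord_continuous || exact: cst_continuous).
Qed.

Lemma gram_cont n (i j : 'I_n) :
  continuous (fun T : 'M[R]_n => \sum_k T k i * T k j).
Proof. by apply: sum_cont => k; apply: mul_cont; exact: coord_continuous. Qed.

End A.
Section B.
Variables (R : realType) (n : nat) (G : set 'M[R]_n) (I : ('M[R]_n -> R) -> R).
Hypothesis HI : haar_integral G I.
Implicit Types (f g : 'M[R]_n -> R).

Lemma I_add f g : continuous f -> continuous g ->
  I (fun T => f T + g T) = I f + I g.
Proof. by case: HI => H _ _ _ _ cf cg; apply: H; exact: continuous_subspaceT. Qed.

Lemma I_scale (c : R) f : continuous f -> I (fun T => c * f T) = c * I f.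
Proof. by case: HI => _ H _ _ _ cf; apply: H; exact: continuous_subspaceT. Qed.

Lemma I_pos f : continuous f -> (forall T, G T -> 0 <= f T) -> 0 <= I f.
Proof. by case: HI => _ _ H _ _ cf; apply: H; exact: continuous_subspaceT. Qed.

Lemma I_one : I (fun _ => 1) = 1.
Proof. by case: HI. Qed.

Lemma I_const (c : R) : I (fun _ => c) = c.
Proof.
have -> : (fun _ : 'M[R]_n => c) = (fun _ => c * 1) by apply: funext => ?; rewrite mulr1.
by rewrite I_scale ?I_one ?mulr1 //; exact: cst_continuous.
Qed.

Lemma I_ext f g : continuous f -> continuous g -> (forall T, G T -> f T = g T) ->
  I f = I g.
Proof.
move=> cf cg Hfg.
have cd : continuous (fun T => f T - g T).
  by move=> x; apply: continuousB; [apply: cf|apply: cg].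
have h1 : 0 <= I (fun T => f T - g T) by apply: I_pos => // T GT; rewrite Hfg // subrr.
have cd2 : continuous (fun T => -1 * (f T - g T)).
  by apply: mul_cont => //; exact: cst_continuous.
have h2 : 0 <= I (fun T => -1 * (f T - g T)).
  by apply: I_pos => // T GT; rewrite Hfg // subrr mulr0.
rewrite I_scale // in h2.
have e0 : I (fun T => f T - g T) = 0 by apply/eqP; rewrite eq_le h1 andbT; lra.
have -> : I f = I (fun T => g T + (f T - g T)) by congr I; apply: funext => T; rewrite addrC subrK.
by rewrite I_add // e0 addr0.
Qed.

Lemma I_lb f (c : R) : continuous f -> (forall T, G T -> c <= f T) -> c <= I f.
Proof.
move=> cf Hc.
have cd : continuous (fun T => f T - c).
  by move=> x; apply: continuousB; [apply: cf|apply: cst_continuous].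
have h : 0 <= I (fun T => f T - c) by apply: I_pos => // T GT; rewrite subr_ge0 Hc.
have -> : I f = I (fun T => (f T - c) + c) by congr I; apply: funext => T; rewrite subrK.
rewrite I_add //; last exact: cst_continuous.
rewrite I_const; lra.
Qed.

Lemma I_sum (J : Type) (r : seq J) (F : J -> 'M[R]_n -> R) :
  (forall j, continuous (F j)) ->
  I (fun T => \sum_(j <- r) F j T) = \sum_(j <- r) I (F j).
Proof.
move=> HF; elim: r => [|a r IH].
  by under eq_fun do rewrite big_nil; rewrite big_nil I_const.
under eq_fun do rewrite big_cons.
by rewrite I_add // ?IH ?big_cons //; exact: sum_cont.
Qed.

Lemma I_right f S : G S -> continuous f -> I (fun T => f (T *m S)) = I f.
Proof. by case: HI => _ _ _ _ H GS cf; by case: (H S f GS (continuous_subspaceT cf)). Qed.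

End B.
Section C.
Variables (R : realType) (n : nat) (G : set 'M[R]_n) (I : ('M[R]_n -> R) -> R).
Hypothesis HI : haar_integral G I.

Definition gramA : 'M[R]_n := \matrix_(i, j) I (fun T => \sum_k T k i * T k j).

Lemma dotE_pt (T : 'M[R]_n) (x y : 'cV[R]_n) :
  dotE (T *m x) (T *m y) =
  \sum_i \sum_j (x i 0 * y j 0) * (\sum_k T k i * T k j).
Proof.
rewrite /dotE.
under eq_bigr do rewrite !mxE mulr_suml.
under [RHS]eq_bigr do under eq_bigr do rewrite mulr_sumr.
rewrite exchange_big /=; apply: eq_bigr => i _.
rewrite [RHS]exchange_big /=; apply: eq_bigr => k _.
rewrite mulr_sumr; apply: eq_bigr => j _; ring.
Qed.

Lemma hiE (x y : 'cV[R]_n) : haar_inner I x y = (x^T *m gramA *m y) 0 0.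
Proof.
rewrite /haar_inner.
under eq_fun do rewrite dotE_pt.
rewrite (I_sum HI) //; last first.
  move=> i; apply: sum_cont => j; apply: mul_cont; first exact: cst_continuous.
  exact: gram_cont.
rewrite mxE; under [RHS]eq_bigr do rewrite mxE mulr_suml.
rewrite [RHS]exchange_big /=; apply: eq_bigr => i _.
rewrite (I_sum HI) //; last first.
  move=> j; apply: mul_cont; first exact: cst_continuous.
  exact: gram_cont.
apply: eq_bigr => j _; rewrite (I_scale HI) //; last exact: gram_cont.
by rewrite !mxE; ring.
Qed.

Lemma gramA_sym : gramA^T = gramA.
Proof.
apply/matrixP => i j; rewrite !mxE; congr I; apply: funext => T.
by apply: eq_bigr => k _; rewrite mulrC.
Qed.

End C.
Section D.
Variables (R : realType).

Lemma entry_le_norm m n (y : 'M[R]_(m, n)) i j : `|y i j| <= `|y|.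
Proof.
change (`|y i j| <= mx_norm y); rewrite mx_normrE; apply/bigmax_geP; right => /=.
by exists (i, j).
Qed.

Lemma CS_ineq n (a : 'I_n -> R) :
  (\sum_i a i) ^+ 2 <= n%:R * \sum_i a i ^+ 2.
Proof.
elim: n a => [|n IH] a; first by rewrite !big_ord0 expr0n /= mul0r.
rewrite !big_ord_recr /=.
set s := \sum_(i < n) a (widen_ord (leqnSn n) i).
set q := \sum_(i < n) a (widen_ord (leqnSn n) i) ^+ 2.
have h1 : s ^+ 2 <= n%:R * q by apply: IH.
have h2 : 0 <= q by apply: sumr_ge0 => i _; apply: sqr_ge0.
have h3 : (0 : R) <= n%:R by [].
set b := a ord_max.
rewrite -natr1.
have key : 2 * s * b <= q + n%:R * b ^+ 2.
  have [n0|npos] := eqVneq n 0%N.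
    move: h1; rewrite n0 mul0r => h1.
    have s0 : s = 0 by apply/eqP; rewrite -sqrf_eq0 eq_le h1 sqr_ge0.
    by rewrite s0 mulr0 mul0r; nra.
  have hn : (0 : R) < n%:R by rewrite ltr0n lt0n.
  have : 0 <= (s - n%:R * b) ^+ 2 by apply: sqr_ge0.
  nra.
nra.
Qed.

End D.
Section E.
Variables (R : realType) (n : nat) (Om : set 'cV[R]_n).

Lemma GL_inv T : GLOm Om T -> GLOm Om (invmx T).
Proof.
move=> [Tu TOm]; split; first by rewrite unitmx_inv.
apply/seteqP; split => z.
  move=> [y Omy <-]; rewrite -TOm in Omy; case: Omy => w Omw <-.
  by rewrite mulKmx.
move=> Omz; exists (T *m z); last by rewrite mulKmx.
by rewrite -TOm; exists z.
Qed.

Lemma GL_maps T y : GLOm Om T -> Om y -> Om (T *m y).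
Proof. by move=> [_ TOm] Omy; rewrite -TOm; exists y. Qed.

Lemma bound_G : state_space Om ->
  exists B : R, 0 <= B /\ forall S, GLOm Om S -> forall i j, `|S i j| <= B.
Proof.
move=> [cOm [_ [spanOm _]]].
have := compact_bounded cOm => -[M0 [_ HM0]].
have HM : forall y, Om y -> `|y| <= `|M0| + 1.
  by move=> y Omy; apply: (HM0 (`|M0| + 1)) => //; rewrite (le_lt_trans (ler_norm _)) // ltrDl.
set M := `|M0| + 1.
have Hj : forall j : 'I_n, exists b : R, forall S, GLOm Om S -> forall i, `|S i j| <= b.
  move=> j.
  have : lin_span Om (delta_mx j 0) by rewrite spanOm.
  move=> [k [c [w [Omw Hd]]]].
  exists (\sum_(l < k) `|c l| * M) => S GS i.
  have -> : S i j = (S *m \sum_(l < k) c l *: w l) i 0.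
    by rewrite -Hd -colE mxE.
  rewrite mulmx_sumr summxE (le_trans (ler_norm_sum _ _ _)) //.
  apply: ler_sum => l _; rewrite -scalemxAr mxE normrM ler_wpM2l //.
  exact: le_trans (entry_le_norm _ _ _) (HM _ (GL_maps GS (Omw l))).
have [b Hb] := choice Hj.
exists (\sum_j `|b j|); split; first by apply: sumr_ge0 => j _.
move=> S GS i j; apply: le_trans (Hb j S GS i) _.
rewrite (bigD1 j) //= (le_trans (ler_norm _)) // lerDl.
by apply: sumr_ge0 => l _.
Qed.

End E.
Section F.
Variables (R : realType) (n : nat) (Om : set 'cV[R]_n) (I : ('M[R]_n -> R) -> R).
Hypothesis HI : haar_integral (GLOm Om) I.

Lemma dotE_ge0 (x : 'cV[R]_n) : 0 <= dotE x x.
Proof. by apply: sumr_ge0 => i _; rewrite -expr2 sqr_ge0. Qed.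

Lemma dotE_gt0 (x : 'cV[R]_n) : x != 0 -> 0 < dotE x x.
Proof.
move=> x0; rewrite lt_neqAle dotE_ge0 andbT eq_sym; apply/negP => /eqP h.
move/eqP: x0; apply; apply/matrixP => i j; rewrite (ord1 j) mxE.
have hk : forall k : 'I_n, xpredT k -> 0 <= x k 0 * x k 0.
  by move=> k _; rewrite -expr2 sqr_ge0.
have := @psumr_eq0P _ _ xpredT (fun k => x k 0 * x k 0) hk h i isT.
by rewrite -expr2 => /eqP; rewrite sqrf_eq0 => /eqP.
Qed.

Lemma dot_lb (B : R) T (x : 'cV[R]_n) : 0 <= B ->
  (forall S, GLOm Om S -> forall i j, `|S i j| <= B) -> GLOm Om T ->
  dotE x x <= (n%:R * n%:R * B ^+ 2) * dotE (T *m x) (T *m x).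
Proof.
move=> B0 HB GT.
have Tu : T \in unitmx by case: GT.
have GS := GL_inv GT.
set y := T *m x.
have -> : x = invmx T *m y by rewrite /y mulKmx.
set S := invmx T.
rewrite /dotE.
under eq_bigr do rewrite -expr2 mxE.
apply: (@le_trans _ _ (\sum_(j < n) n%:R * \sum_i (S j i * y i 0) ^+ 2)).
  by apply: ler_sum => j _; apply: CS_ineq.
apply: (@le_trans _ _ (\sum_(j < n) n%:R * \sum_i (B ^+ 2 * y i 0 ^+ 2))).
  apply: ler_sum => j _; apply: ler_wpM2l => //; apply: ler_sum => i _.
  rewrite exprMn ler_wpM2r ?sqr_ge0 //.
  rewrite -real_normK ?num_real // -[B ^+ 2]ger0_norm ?sqr_ge0 //.
  rewrite normrX lerXn2r ?nnegrE //.
  by rewrite (ger0_norm B0); exact: HB.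
rewrite sumr_const card_ord -mulr_sumr -mulr_natr.
under [X in _ <= _ * X]eq_bigr do rewrite -expr2.
by rewrite -mulr_natr le_eqVlt; apply/orP; left; apply/eqP; ring.
Qed.

Lemma hi_pos (x : 'cV[R]_n) : state_space Om -> x != 0 -> 0 < haar_inner I x x.
Proof.
move=> SS x0; have [B [B0 HB]] := bound_G SS.
set K := n%:R * n%:R * B ^+ 2 + 1.
have K0 : 0 < K by rewrite /K ltr_pwDr // !mulr_ge0 ?sqr_ge0.
apply: (@lt_le_trans _ _ (dotE x x / K)); first by rewrite divr_gt0 // dotE_gt0.
apply: (I_lb HI); first exact: dotE_cont.
move=> T GT; rewrite ler_pdivrMr // (le_trans (dot_lb x B0 HB GT)) //.
by rewrite mulrC ler_wpM2l ?dotE_ge0 // lerDl.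
Qed.

Lemma hi_inv S (x y : 'cV[R]_n) : GLOm Om S ->
  haar_inner I (S *m x) (S *m y) = haar_inner I x y.
Proof.
move=> GS; rewrite /haar_inner.
under eq_fun do rewrite !mulmxA.
have H := I_right HI (f := fun T => dotE (T *m x) (T *m y)) GS (@dotE_cont _ _ x y).
exact: H.
Qed.

Lemma hi_fix (om : 'cV[R]_n) : (forall T, GLOm Om T -> T *m om = om) ->
  dotE om om = 1 -> haar_inner I om om = 1.
Proof.
move=> Hf H1; rewrite /haar_inner -(I_const HI 1).
apply: (I_ext HI); [exact: dotE_cont|exact: cst_continuous|].
by move=> T GT; rewrite Hf.
Qed.

End F.
Section G.
Variables (R : realType) (n : nat).

Lemma dotEE_cont : continuous (fun x : 'cV[R]_n => dotE x x).
Proof. by apply: sum_cont => i; apply: mul_cont; exact: coord_continuous. Qed.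

Lemma conv_id (y z : 'cV[R]_n) (t : R) :
  t * dotE y y + (1 - t) * dotE z z - dotE (t *: y + (1 - t) *: z) (t *: y + (1 - t) *: z)
  = t * (1 - t) * dotE (y - z) (y - z).
Proof.
rewrite /dotE !mulr_sumr -big_split -sumrB /=; apply: eq_bigr => i _.
rewrite !mxE; ring.
Qed.

Lemma ext_max (K : set 'cV[R]_n) (f : 'cV[R]_n -> R) :
  compact K -> K !=set0 -> continuous f ->
  (forall y z t, f (t *: y + (1 - t) *: z) = t * f y + (1 - t) * f z) ->
  exists p, extreme_point K p /\ forall y, K y -> f y <= f p.
Proof.
move=> cK K0 cf fl.
have [c cK' Hc] := compact_EVT_max K0 cK (continuous_subspaceT cf).
have Kc : K c by move: cK'; rewrite inE.
have Hc' : forall y, K y -> f y <= f c by move=> y Ky; apply: Hc; rewrite inE.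
set F := K `&` (f @^-1` [set f c]).
have cF : compact F.
  apply: compact_closedI => //; apply: preimage_closed; last exact: closed_eq.
  by move=> x _; apply: cf.
have F0 : F !=set0 by exists c; split.
have [p pF' Hp] := compact_EVT_max F0 cF (continuous_subspaceT (@dotEE_cont)).
have [Kp fp] : F p by move: pF'; rewrite inE.
have Hp' : forall y, F y -> dotE y y <= dotE p p by move=> y Fy; apply: Hp; rewrite inE.
exists p; split; last by move=> y Ky; rewrite fp /=; apply: Hc'.
split => // y z t Ky Kz /andP[t0 t1] pE.
have fy := Hc' y Ky; have fz := Hc' z Kz.
have fpE : f p = t * f y + (1 - t) * f z by rewrite pE fl.
rewrite /= in fp.
have ey : f y = f c by nra.
have ez : f z = f c by nra.
have gy := Hp' y (conj Ky ey); have gz := Hp' z (conj Kz ez).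
have := conv_id y z t; rewrite -pE => hid.
have hle : dotE (y - z) (y - z) <= 0.
  have htt : 0 < t * (1 - t) by rewrite mulr_gt0 // subr_gt0.
  rewrite -(pmulr_rle0 _ htt) -hid.
  nra.
apply/eqP; rewrite -subr_eq0; apply/negP => /negP yz.
by have := dotE_gt0 yz; rewrite ltNge hle.
Qed.

End G.
Section H.
Variables (R : realType) (n : nat) (Om : set 'cV[R]_n) (I : ('M[R]_n -> R) -> R)
  (omM : 'cV[R]_n).
Hypotheses (SS : state_space Om) (TR : transitive_ss Om) (HI : haar_integral (GLOm Om) I)
  (OmM : Om omM) (Hfix : forall T, GLOm Om T -> T *m omM = omM) (H1 : dotE omM omM = 1).

Lemma rowmul_cont (r : 'rV[R]_n) : continuous (fun x : 'cV[R]_n => (r *m x) 0 0).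
Proof.
under eq_fun do rewrite mxE.
by apply: sum_cont => j; apply: mul_cont; [exact: cst_continuous|exact: coord_continuous].
Qed.

Lemma hi_lin (x y z : 'cV[R]_n) (a b : R) :
  haar_inner I x (a *: y + b *: z) = a * haar_inner I x y + b * haar_inner I x z.
Proof. by rewrite !(hiE HI) mulmxDr -!scalemxAr !mxE. Qed.

Lemma phi_one y : Om y -> haar_inner I omM y = 1.
Proof.
move=> Omy.
case: SS => cOm _.
have Om0 : Om !=set0 by exists omM.
have cphi : continuous (fun x => haar_inner I omM x).
  by under eq_fun do rewrite (hiE HI); exact: rowmul_cont.
have [p [ep Hp]] := ext_max cOm Om0 cphi (fun y z t => hi_lin omM y z t (1 - t)).
have cnphi : continuous (fun x => - haar_inner I omM x).
  by move=> x; apply: continuousN; apply: cphi.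
have lin2 : forall y z t, - haar_inner I omM (t *: y + (1 - t) *: z) =
    t * (- haar_inner I omM y) + (1 - t) * (- haar_inner I omM z).
  by move=> y' z t; rewrite hi_lin; ring.
have [q [eq' Hq]] := ext_max cOm Om0 cnphi lin2.
have [T [GT Tpq]] := TR ep eq'.
have epq : haar_inner I omM q = haar_inner I omM p.
  by rewrite -Tpq -{1}(Hfix GT) (hi_inv HI).
have h1 := Hp y Omy; have h2 := Hq y Omy.
have h3 := Hp omM OmM; have h4 := Hq omM OmM.
have h5 := hi_fix HI Hfix H1.
lra.
Qed.

End H.
Section LA.
Variables (R : realType) (n : nat) (A : 'M[R]_n).
Hypotheses (Asym : A^T = A) (Apos : forall r : 'rV[R]_n, r != 0 -> 0 < (r *m A *m r^T) 0 0).

Lemma ext_step m (W : 'M[R]_(m, n)) : (m < n)%N -> W *m A *m W^T = 1%:M ->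
  exists y : 'rV[R]_n, W *m A *m y^T = 0 /\ y *m A *m y^T = 1%:M.
Proof.
move=> mn HW.
have nf : ~~ (1%:M <= W)%MS.
  rewrite sub1mx; apply/negP => /eqP rk.
  by have := rank_leq_row W; rewrite rk leqNgt mn.
have [i Hi] := row_subPn nf.
set x := row i (1%:M : 'M[R]_n).
set c := x *m A *m W^T.
set y' := x - c *m W.
have cT : c^T = W *m A *m x^T by rewrite /c !trmx_mul trmxK Asym mulmxA.
have hW : W *m A *m y'^T = 0.
  rewrite /y' linearB /= trmx_mul cT mulmxBr !mulmxA HW mul1mx.
  by rewrite -!mulmxA subrr.
have y0 : y' != 0.
  apply/negP => /eqP h; apply: (negP Hi).
  have ex : x = c *m W by apply/eqP; rewrite -subr_eq0 -/y' h.
  change (x <= W)%MS; rewrite ex; exact: submxMl.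
set s := (y' *m A *m y'^T) 0 0.
have s0 : 0 < s := Apos y0.
set k := (Num.sqrt s)^-1.
exists (k *: y'); split.
  by rewrite linearZ /= -scalemxAr hW scaler0.
rewrite linearZ /= -scalemxAr -!scalemxAl.
apply/matrixP => a b; rewrite !ord1 [LHS]mxE [in LHS]mxE -/s mxE eqxx /k.
by rewrite mulrA -expr2 exprVn sqr_sqrtr ?ltW // mulVf // gt_eqF.
Qed.

Lemma blk m1 m2 (Y : 'M[R]_(m1, n)) (W : 'M[R]_(m2, n)) :
  Y *m A *m Y^T = 1%:M -> W *m A *m W^T = 1%:M -> W *m A *m Y^T = 0 ->
  col_mx Y W *m A *m (col_mx Y W)^T = 1%:M.
Proof.
move=> Hy2 HW Hy1.
rewrite tr_col_mx !mul_col_mx !mul_mx_row HW Hy1 Hy2 -block_mxEv.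
have -> : Y *m A *m W^T = 0.
  by apply: trmx_inj; rewrite !trmx_mul trmxK Asym mulmxA Hy1 trmx0.
by rewrite [RHS]scalar_mx_block.
Qed.

Lemma gs (u : 'rV[R]_n) : u *m A *m u^T = 1%:M ->
  forall m, (m < n)%N -> exists W : 'M[R]_(m.+1, n),
    W *m A *m W^T = 1%:M /\ row ord_max W = u.
Proof.
move=> Hu; elim => [|m IH] mn.
  exists u; split => //; apply/rowP => j; rewrite !mxE.
  by congr (u _ _); apply/val_inj.
have [W [HW HWu]] := IH (ltnW mn).
have [y [Hy1 Hy2]] := ext_step mn HW.
exists (col_mx y W); split.
  exact: (@blk 1 m.+1 y W Hy2 HW Hy1).
have -> : (ord_max : 'I_(1 + m.+1)) = rshift 1 (ord_max : 'I_m.+1) by apply/val_inj.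
rewrite -HWu; exact: (@rowKd _ 1 m.+1 n ord_max y W).
Qed.

End LA.
Section Fin.
Variables (R : realType) (n : nat) (I : ('M[R]_n -> R) -> R) (G : set 'M[R]_n).
Hypothesis HI : haar_integral G I.

Lemma hi_sum (z : 'cV[R]_n) k (c : 'I_k -> R) (w : 'I_k -> 'cV[R]_n) :
  haar_inner I z (\sum_(i < k) c i *: w i) = \sum_(i < k) c i * haar_inner I z (w i).
Proof.
rewrite (hiE HI) mulmx_sumr summxE; apply: eq_bigr => i _.
by rewrite -scalemxAr mxE (hiE HI).
Qed.

Lemma hi_add (z x y : 'cV[R]_n) :
  haar_inner I z (x + y) = haar_inner I z x + haar_inner I z y.
Proof. by rewrite !(hiE HI) mulmxDr mxE. Qed.

Lemma row_entry (A W : 'M[R]_n) i j :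
  (row i W *m A *m (row j W)^T) 0 0 = (W *m A *m W^T) i j.
Proof.
rewrite -row_mul !mxE; apply: eq_bigr => k _; rewrite !mxE.
done.
Qed.

End Fin.
Theorem proposition2p12 (R : realType) (N : nat) (Om : set 'cV[R]_N.+1)
    (I : ('M[R]_N.+1 -> R) -> R) (omM : 'cV[R]_N.+1) :
  state_space Om ->
  transitive_ss Om ->
  haar_integral (GLOm Om) I ->
  Om omM -> (forall T, GLOm Om T -> T *m omM = omM) ->
  dotE omM omM = 1 ->
  exists v : 'I_N.+1 -> 'cV[R]_N.+1,
    [/\ (forall x : 'cV[R]_N.+1, exists a : 'I_N.+1 -> R,
           x = \sum_(l < N.+1) a l *: v l),
        (forall i j, haar_inner I (v i) (v j) = (i == j)%:R),
        v ord_max = omM &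
        (forall x : 'cV[R]_N.+1, aff_hull Om x <->
           exists a : 'I_N -> R,
             x = \sum_(l < N) a l *: v (widen_ord (leqnSn N) l) + omM)].
Proof.
move=> SS TR HI OmM Hfix H1.
set A := gramA I.
have Asym : A^T = A by apply: gramA_sym.
have Apos : forall r : 'rV[R]_N.+1, r != 0 -> 0 < (r *m A *m r^T) 0 0.
  move=> r r0; have := hi_pos HI (x := r^T) SS.
  rewrite (hiE HI) trmxK; apply.
  by apply: contra r0 => /eqP h; apply/eqP; rewrite -[r]trmxK h trmx0.
have hom := hi_fix HI Hfix H1.
have Hu : omM^T *m A *m omM^T^T = 1%:M.
  by apply/matrixP => a b; rewrite !ord1 trmxK -(hiE HI) hom mxE eqxx.
have [W [HW HWu]] := gs Asym Apos Hu (ltnSn N).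
set v := fun l => (row l W)^T.
have orth : forall i j, haar_inner I (v i) (v j) = (i == j)%:R.
  by move=> i j; rewrite (hiE HI) /v trmxK row_entry HW mxE.
have vmax : v ord_max = omM by rewrite /v HWu trmxK.
have Wu : W \in unitmx.
  by have [] := @mulmx1_unit _ _ W (A *m W^T); rewrite ?mulmxA.
have span : forall x : 'cV[R]_N.+1, exists a : 'I_N.+1 -> R,
    x = \sum_(l < N.+1) a l *: v l.
  move=> x; exists (fun l => (x^T *m invmx W) 0 l).
  have e : x^T = \sum_(l < N.+1) (x^T *m invmx W) 0 l *: row l W.
    by rewrite -mulmx_sum_row mulmxKV.
  apply: trmx_inj; rewrite {1}e linear_sum /=; apply: eq_bigr => l _.
  by rewrite linearZ /= /v trmxK.
have phi1 := phi_one SS TR HI OmM Hfix H1.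
have phiv : forall l, haar_inner I omM (v l) = (ord_max == l)%:R.
  by move=> l; rewrite -vmax orth.
exists v; split => // x; split.
  move=> [k [c [w [Omw [s1 Hx]]]]].
  have px : haar_inner I omM x = 1.
    rewrite Hx (hi_sum HI) -s1; apply: eq_bigr => i _.
    by rewrite phi1 ?mulr1.
  have [a Ha] := span x.
  have a1 : a ord_max = 1.
    rewrite -px Ha (hi_sum HI) big_ord_recr /= phiv eqxx mulr1.
    rewrite big1 ?add0r // => l _; rewrite phiv.
    have -> : (ord_max == widen_ord (leqnSn N) l) = false.
      by apply/negbTE; rewrite -val_eqE /= neq_ltn ltn_ord orbT.
    by rewrite mulr0.
  exists (fun l => a (widen_ord (leqnSn N) l)).
  by rewrite Ha big_ord_recr /= a1 scale1r vmax.
move=> [a Hx].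
have px : haar_inner I omM x = 1.
  rewrite Hx (hi_add HI) (hi_sum HI) hom big1 ?add0r // => l _.
  rewrite phiv.
  have -> : (ord_max == widen_ord (leqnSn N) l) = false.
    by apply/negbTE; rewrite -val_eqE /= neq_ltn ltn_ord orbT.
  by rewrite mulr0.
case: SS => _ [_ [spanOm _]].
have : lin_span Om x by rewrite spanOm.
move=> [k [c [w [Omw Hx']]]].
exists k, c, w; split => //; split => //.
rewrite -px Hx' (hi_sum HI); apply: eq_bigr => i _.
by rewrite phi1 ?mulr1.
Qed.
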